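(* Let $F$ be a Ferrers diagram and let $c\in\mathsf{Rec}^{\mathsf{min}}(G(F))$. Define the $0/1$-filling $T=\phi_{CT}(c)$ of $F$ by setting, for each cell in row $i\in\mathsf{rows}(F)$ and column $j\in\mathsf{cols}(F)$, $T_{ij}=0$ if $i$ topples after $j$ in $\mathsf{CanonTop}(c)$ and $T_{ij}=1$ if $i$ topples before $j$ in $\mathsf{CanonTop}(c)$. Then $\phi_{CT}$ is the inverse of the bijection $\phi_{TC}:\mathsf{EWtab}(F)\to\mathsf{Rec}^{\mathsf{min}}(G(F))$; in particular $T\in\mathsf{EWtab}(F)$ and $\phi_{TC}(T)=c$.
   Context: Ferrers diagrams and graphs: a Ferrers diagram $F$ (English convention) of semiperimeter $n+1$ has rows and columns labeled by $0,\ldots,n$: the $n+1$ unit steps of its south-east boundary path, traversed from top-right to bottom-left, are labeled $0,\ldots,n$; a vertical step labels the row it bounds, a horizontal step the column it bounds (top row labeled $0$). $\mathsf{rows}(F)$, $\mathsf{cols}(F)$ are the label sets; $F$ has a cell in row $i$, column $j$ iff $i<j$. $G(F)$ has vertex set $\{0,\ldots,n\}$ with edges $\{i,j\}$, $i\in\mathsf{rows}(F)$, $j\in\mathsf{cols}(F)$, $i<j$. Sandpile model with sink $0$: configurations $c\in\mathbb{N}^n$; non-sink $v$ unstable if $c_v\ge\deg(v)$; toppling sends one grain to each neighbour (grains to $0$ disappear); toppling the sink adds a grain to each neighbour of $0$. Recurrent: stable configurations obtainable from $c_v=\deg(v)-1$ by adding grains and stabilizing. $\mathsf{Rec}^{\mathsf{min}}(G)$: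 recurrent configurations of minimal total number of grains. Canonical toppling of a recurrent $c$: topple the sink ($U^{(0)}_c=\{0\}$), then alternately topple simultaneously all unstable vertices in $\mathsf{cols}(F)$ ($V^{(1)}_c$), all unstable in $\mathsf{rows}(F)$ ($U^{(1)}_c$), etc.; $\mathsf{CanonTop}(c)=(U^{(0)}_c,V^{(1)}_c,U^{(1)}_c,\ldots)$ is an ordered partition of $\{0,\ldots,n\}$, each vertex toppling exactly once; ''$a$ topples before $b$'' means the block of $a$ precedes the block of $b$. EW-tableaux: a $0/1$-filling $T$ of $F$ ($T_{ij}$ = entry in row $i$, column $j$) such that (1) the top row consists of 1s, (2) every other row contains at least one 0, (3) no four cells at the corners of a rectangle have 0s in two diagonally opposite corners and 1s in the other two. $\mathsf{EWtab}(F)$ is their set. The map $\phi_{TC}$ sends $T$ to the configuration $c$ with $c_i$ = number of 1s in row $i$ if $i\in\mathsf{rows}(F)$, and $c_i$ = number of 0s in column $i$ if $i\in\mathsf{cols}(F)$, $i\ne 0$; it is known to be a bijection $\mathsf{EWtab}(F)\to\mathsf{Rec}^{\mathsf{min}}(G(F))$. *)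

(* Defs.v *)
From Stdlib Require Import Relations.
From mathcomp Require Import all_boot.
From mathcomp Require Import boolp.
Set Implicit Arguments.
Unset Strict Implicit.
Unset Printing Implicit Defensive.

(* A Ferrers diagram of semiperimeter n+1 is encoded by the set R of labels
   of its rows, a subset of {0,...,n} = 'I_n.+1 ; the columns are the other
   labels.  The boundary path starts (top-right) with a vertical step and
   ends (bottom-left) with a horizontal step, i.e. 0 is a row label and n a
   column label. *)
Definition ferrers (n : nat) (R : {set 'I_n.+1}) : bool :=
  (ord0 \in R) && (ord_max \notin R).

Definition cell n (R : {set 'I_n.+1}) (i j : 'I_n.+1) : bool :=
  [&& i \in R, j \notin R & i < j].

Definition adj n (R : {set 'I_n.+1}) (u v : 'I_n.+1) : bool :=
  cell R u v || cell R v u.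

Definition deg n (R : {set 'I_n.+1}) (v : 'I_n.+1) : nat :=
  #|[set u | adj R v u]|.

(* Sandpile configurations: values on the non-sink vertices; the value at
   the sink 0 is kept equal to 0 by all the operations below. *)
Definition config n := {ffun 'I_n.+1 -> nat}.

Definition stable n (R : {set 'I_n.+1}) (c : config n) : Prop :=
  forall v, v != ord0 -> c v < deg R v.

Definition add_grain n (c : config n) (v : 'I_n.+1) : config n :=
  [ffun u => c u + (u == v)].

Definition topple n (R : {set 'I_n.+1}) (c : config n) (v : 'I_n.+1) : config n :=
  [ffun u => if u == ord0 then c u
             else if u == v then c u - deg R v else c u + adj R v u].

Definition topple_set n (R : {set 'I_n.+1}) (c : config n) (S : {set 'I_n.+1})
  : config n :=
  [ffun u => if u == ord0 then c u
             else (c u + #|[set w in S | adj R w u]|)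
                  - (if u \in S then deg R u else 0)].

Definition topple_sink n (R : {set 'I_n.+1}) (c : config n) : config n :=
  [ffun u => if u == ord0 then c u else c u + adj R ord0 u].

Definition sp_step n (R : {set 'I_n.+1}) (c c' : config n) : Prop :=
  (exists2 v, v != ord0 & c' = add_grain c v) \/
  (exists v, [/\ v != ord0, deg R v <= c v & c' = topple R c v]).

Definition cmax n (R : {set 'I_n.+1}) : config n :=
  [ffun v => if v == ord0 then 0 else (deg R v).-1].

Definition recurrent n (R : {set 'I_n.+1}) (c : config n) : Prop :=
  stable R c /\ clos_refl_trans _ (@sp_step n R) (cmax R) c.

Definition grains n (c : config n) : nat := \sum_v c v.

Definition rec_min n (R : {set 'I_n.+1}) (c : config n) : Prop :=
  recurrent R c /\ forall c', recurrent R c' -> grains c <= grains c'.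

(* Canonical toppling.  canon_cfg c k is the configuration after block k;
   canon_block c k is the k-th block: block 0 = {sink}, odd blocks are the
   unstable (non-sink) columns, even blocks >= 2 the unstable (non-sink) rows. *)
Definition unstable_in n (R : {set 'I_n.+1}) (c : config n) (col : bool)
  : {set 'I_n.+1} :=
  [set v | [&& v != ord0, (v \notin R) == col & deg R v <= c v]].

Fixpoint canon_cfg n (R : {set 'I_n.+1}) (c : config n) (k : nat) : config n :=
  match k with
  | 0 => topple_sink R c
  | k'.+1 => let d := canon_cfg R c k' in
             topple_set R d (unstable_in R d (odd k))
  end.

Definition canon_block n (R : {set 'I_n.+1}) (c : config n) (k : nat)
  : {set 'I_n.+1} :=
  match k with
  | 0 => [set ord0]
  | k'.+1 => unstable_in R (canon_cfg R c k') (odd k)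
  end.

Definition topples_before n (R : {set 'I_n.+1}) (c : config n) (a b : 'I_n.+1)
  : Prop :=
  exists k, a \in canon_block R c k /\ forall k', k' <= k -> b \notin canon_block R c k'.

(* 0/1-fillings of F: only the values on cells of F are meaningful. *)
Definition filling n := 'I_n.+1 -> 'I_n.+1 -> bool.

Definition EWtab n (R : {set 'I_n.+1}) (T : filling n) : Prop :=
  [/\ (forall j, cell R ord0 j -> T ord0 j),
      (forall i, i \in R -> i != ord0 -> exists2 j, cell R i j & ~~ T i j) &
      (forall i1 i2 j1 j2 : 'I_n.+1, i1 < i2 -> j1 < j2 ->
         cell R i1 j1 -> cell R i1 j2 -> cell R i2 j1 -> cell R i2 j2 ->
         ~ ([&& ~~ T i1 j1, ~~ T i2 j2, T i1 j2 & T i2 j1] ||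
            [&& ~~ T i1 j2, ~~ T i2 j1, T i1 j1 & T i2 j2]))].

Definition phi_TC n (R : {set 'I_n.+1}) (T : filling n) : config n :=
  [ffun v => if v == ord0 then 0
             else if v \in R then #|[set j | cell R v j && T v j]|
             else #|[set i | cell R i v && ~~ T i v]|].

Definition phi_CT n (R : {set 'I_n.+1}) (c : config n) : filling n :=
  fun i j => `[< topples_before R c i j >].

(* Main.v *)
Require Import Defs.
From Stdlib Require Import Relations.
From mathcomp Require Import all_boot.
From mathcomp Require Import boolp.
From mathcomp Require Import zify.
Set Implicit Arguments. Unset Strict Implicit. Unset Printing Implicit Defensive.
Section Basics.
Variables (n : nat) (R : {set 'I_n.+1}).
Local Notation o := (ord0 : 'I_n.+1).
Local Notation rt := (clos_refl_trans _ (@sp_step n R)).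

Lemma adjC u v : adj R u v = adj R v u.
Proof. by rewrite /adj orbC. Qed.

Lemma adj_irr u : adj R u u = false.
Proof. by rewrite /adj /cell ltnn !andbF. Qed.

Lemma adj_side u v : adj R u v -> (u \in R) = (v \notin R).
Proof. rewrite /adj /cell => /orP[/and3P[H1 H2 _]|/and3P[H1 H2 _]]; first by rewrite H1 H2.
by rewrite (negbTE H2) H1. Qed.

Lemma deg_split v (A : {set 'I_n.+1}) :
  deg R v = #|[set u in A | adj R v u]| + #|[set u | adj R v u & u \notin A]|.
Proof.
rewrite /deg -(cardsID A [set u | adj R v u]); congr (_ + _); apply: eq_card => u;
by rewrite !inE andbC.
Qed.

Lemma topple_set_reach (B : {set 'I_n.+1}) (X : config n) :
  o \notin B -> (forall u w, u \in B -> w \in B -> adj R u w = false) ->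
  (forall w, w \in B -> deg R w <= X w) ->
  rt X (topple_set R X B).
Proof.
move: {2}#|B| (erefl #|B|) => m; elim: m B X => [|m IH] B X HB.
  move/eqP: HB; rewrite cards_eq0 => /eqP -> _ _ _.
  have -> : topple_set R X set0 = X.
    apply/ffunP => u; rewrite !ffunE; case: ifP => // _.
    rewrite in_set0 subn0; have -> : [set w in set0 | adj R w u] = set0.
      by apply/setP => w; rewrite !inE.
    by rewrite cards0 addn0.
  exact: rt_refl.
move=> Ho Hind Hdeg.
have : 0 < #|B| by rewrite HB.
case/card_gt0P => w wB.
have wo : w != o by apply: contraNneq Ho => <-.
apply: (@rt_trans _ _ _ (topple R X w)).
  apply: rt_step; right; exists w; split => //; exact: Hdeg.
have -> : topple_set R X B = topple_set R (topple R X w) (B :\ w).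
  apply/ffunP => u; rewrite !ffunE; case: ifP => // uo.
  rewrite (cardsD1 w [set w' in B | adj R w' u]) inE wB /=.
  have -> : [set w' in B | adj R w' u] :\ w = [set w' in B :\ w | adj R w' u].
    by apply/setP => x; rewrite !inE andbA.
  rewrite !inE; case: (eqVneq u w) => [->|uw] /=.
    rewrite adj_irr wB /= add0n.
    have -> : [set w' in B :\ w | adj R w' w] = set0.
      apply/setP => x; rewrite !inE; case xB: (x \in B); last by rewrite ?andbF ?andFb.
      by rewrite (Hind x w xB wB) ?andbF.
    by rewrite cards0 !addn0 subn0.
  by rewrite addnA.
apply: IH.
- by move: HB; rewrite (cardsD1 w B) wB add1n => -[].
- by rewrite !inE negb_and Ho orbT.
- by move=> x y; rewrite !inE => /andP[_ xB] /andP[_ yB]; exact: Hind.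
- move=> x; rewrite !inE => /andP[xw xB]; rewrite ffunE.
  have xo : x != o by apply: contraNneq Ho => <-.
  by rewrite (negbTE xo) (negbTE xw) (Hind w x wB xB) addn0; exact: Hdeg.
Qed.
End Basics.

Section Basics2.
Variables (n : nat) (R : {set 'I_n.+1}).
Local Notation o := (ord0 : 'I_n.+1).
Local Notation rt := (clos_refl_trans _ (@sp_step n R)).

Lemma canon_cfg_o (d : config n) k : canon_cfg R d k o = d o.
Proof. by elim: k => [|k IH] /=; rewrite ffunE eqxx. Qed.

Lemma block_indep (d : config n) k u w :
  u \in canon_block R d k -> w \in canon_block R d k -> adj R u w = false.
Proof.
case: k => [|k] /=; first by rewrite !inE => /eqP -> /eqP ->; exact: adj_irr.
rewrite !inE => /and3P[_ /eqP Hu _] /and3P[_ /eqP Hw _].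
have : (u \notin R) = (w \notin R) by rewrite Hu Hw.
move=> E; case A: (adj R u w) => //; move: E (adj_side A).
by case: (u \in R); case: (w \in R).
Qed.

Lemma block_o (d : config n) k u : u \in canon_block R d k.+1 -> u != o.
Proof. by rewrite /= inE => /and3P[]. Qed.

Lemma block_unst (d : config n) k u : u \in canon_block R d k.+1 -> deg R u <= canon_cfg R d k u.
Proof. by rewrite /= inE => /and3P[]. Qed.

Lemma canon_reach (d : config n) k : rt (topple_sink R d) (canon_cfg R d k).
Proof.
elim: k => [|k IH]; first exact: rt_refl.
apply: rt_trans IH _ => /=.
apply: topple_set_reach.
- by rewrite inE eqxx.
- by move=> u w Hu Hw; exact: (@block_indep d k.+1).
- by move=> w; rewrite inE => /and3P[].
Qed.

Lemma add_many (d d' : config n) : d o = d' o -> (forall w, d w <= d' w) -> rt d d'.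
Proof.
move: {2}(\sum_w (d' w - d w)) (erefl (\sum_w (d' w - d w))) => m.
elim: m d => [|m IH] d Hm Ho Hle.
  have -> : d = d'; last exact: rt_refl.
  apply/ffunP => w; apply/eqP; rewrite eqn_leq Hle /=.
  by move: Hm; rewrite (bigD1 w) //= => /eqP; rewrite addn_eq0 subn_eq0 => /andP[].
case: (pickP (fun w => d w < d' w)) => [w Hw|Hn]; last first.
  move: Hm; rewrite big1 // => w _; apply/eqP; rewrite subn_eq0 leqNgt Hn.
  done.
have wo : w != o by apply: contraTneq Hw => ->; rewrite Ho ltnn.
apply: (@rt_trans _ _ _ (add_grain d w)).
  by apply: rt_step; left; exists w.
apply: IH.
- rewrite (bigD1 w) //= ffunE eqxx addn1.
  move: Hm; rewrite (bigD1 w) //= -(subnSK Hw) addSn => -[<-]; congr (_ + _).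
  by apply: eq_bigr => u uw; rewrite ffunE (negbTE uw) addn0.
- by rewrite ffunE eq_sym (negbTE wo) addn0.
- by move=> u; rewrite ffunE; case: eqVneq => [->|_]; rewrite ?addn1 ?addn0.
Qed.
End Basics2.

Definition NoFSC n (R : {set 'I_n.+1}) (d : config n) :=
  forall S : {set 'I_n.+1}, ord0 \notin S -> S != set0 ->
    exists2 v, v \in S & #|[set u in S | adj R v u]| <= d v.

Section Inv.
Variables (n : nat) (R : {set 'I_n.+1}).
Local Notation o := (ord0 : 'I_n.+1).
Local Notation rt := (clos_refl_trans _ (@sp_step n R)).

Lemma nofsc_step (d d' : config n) : sp_step R d d' ->
  d o = 0 /\ NoFSC R d -> d' o = 0 /\ NoFSC R d'.
Proof.
case=> [[v vo ->]|[w [wo Hw ->]]] [Ho Hn].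
  split; first by rewrite ffunE eq_sym (negbTE vo) addn0.
  move=> S HoS HS; have [u uS Hu] := Hn S HoS HS.
  by exists u => //; rewrite ffunE; apply: leq_trans Hu (leq_addr _ _).
split; first by rewrite ffunE eqxx.
move=> S HoS HS.
have Sno : forall x, x \in S -> x != o by move=> x xS; apply: contraNneq HoS => <-.
case wS: (w \in S); last first.
  have [u uS Hu] := Hn S HoS HS; exists u => //.
  have uw : u != w by apply: contraFneq wS => <-.
  by rewrite ffunE (negbTE (Sno u uS)) (negbTE uw); apply: leq_trans Hu (leq_addr _ _).
case: (eqVneq (S :\ w) set0) => [E|NE].
  exists w => //.
  have -> : [set u in S | adj R w u] = set0.
    apply/setP => x; rewrite !inE; case xS: (x \in S) => //=.
    case: (eqVneq x w) => [->|xw]; first exact: adj_irr.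
    have : x \in S :\ w by rewrite !inE xw xS.
    by rewrite E inE.
  by rewrite cards0.
have [|u uS Hu] := Hn (S :\ w) _ NE; first by rewrite !inE negb_and HoS orbT.
move: uS; rewrite !inE => /andP[uw uS]; exists u => //.
rewrite ffunE (negbTE (Sno u uS)) (negbTE uw).
rewrite (cardsD1 w [set u0 in S | adj R u u0]) !inE wS /= adjC.
have -> : [set u0 in S | adj R u u0] :\ w = [set u0 in S :\ w | adj R u u0].
  by apply/setP => x; rewrite !inE andbA.
by rewrite addnC leq_add2r.
Qed.

Lemma cmax_inv : ferrers R -> cmax R o = 0 /\ NoFSC R (cmax R).
Proof.
move=> /andP[oR maxR]; split; first by rewrite ffunE eqxx.
move=> S HoS HS.
have Sno : forall x, x \in S -> x != o by move=> x xS; apply: contraNneq HoS => <-.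
suff [v vS [x xS Hx]] : exists2 v, v \in S & exists2 x, x \notin S & adj R v x.
  exists v => //; rewrite ffunE (negbTE (Sno v vS)) (deg_split R v S).
  have : 0 < #|[set u | adj R v u & u \notin S]|.
    by apply/card_gt0P; exists x; rewrite !inE Hx xS.
  lia.
case: (pickP (fun v => (v \in S) && (v \notin R))) => [v /andP[vS vR]|HR].
  exists v => //; exists o => //.
  apply/orP; right; rewrite /cell oR vR /=.
  by have := Sno v vS; rewrite -val_eqE /= lt0n.
case/set0Pn: HS => v vS; exists v => //; exists ord_max.
  by apply: contraNN maxR => mS; move: (HR ord_max); rewrite mS /= => /negbT; rewrite negbK.
have vR : v \in R by move: (HR v); rewrite vS /= => /negbT; rewrite negbK.
rewrite /adj /cell vR maxR /=.
have : v != ord_max by apply: contraTneq vR => ->.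
rewrite -val_eqE /= => Hv.
by rewrite ltn_neqAle Hv -ltnS ltn_ord.
Qed.

Lemma rt_inv (x y : config n) : rt x y -> x o = 0 /\ NoFSC R x -> y o = 0 /\ NoFSC R y.
Proof.
elim => [a b Hs|a|a b c' _ IH1 _ IH2] //; last by move/IH1/IH2.
exact: nofsc_step.
Qed.

Lemma rec_inv (c : config n) : ferrers R -> recurrent R c -> c o = 0 /\ NoFSC R c.
Proof. by move=> Hf [_ Hrt]; apply: rt_inv Hrt (cmax_inv Hf). Qed.
End Inv.

Lemma card_union_disj (T : finType) (A B : {set T}) (P : pred T) :
  [disjoint A & B] ->
  #|[set w in A :|: B | P w]| = #|[set w in A | P w]| + #|[set w in B | P w]|.
Proof.
move=> H; rewrite -cardsUI.
have -> : [set w in A | P w] :&: [set w in B | P w] = set0.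
  apply/setP => x; rewrite !inE; case xA: (x \in A) => //=.
  by rewrite (disjointFr H xA) andbF.
rewrite cards0 addn0; apply: eq_card => x; rewrite !inE.
by rewrite andb_orl.
Qed.

Section Analysis.
Variables (n : nat) (R : {set 'I_n.+1}) (d : config n).
Hypothesis Hst : stable R d.
Hypothesis Hnf : NoFSC R d.
Local Notation o := (ord0 : 'I_n.+1).
Local Notation blk := (canon_block R d).
Local Notation cfg := (canon_cfg R d).

Definition Tset k := [set u | has (fun k' => u \in blk k') (iota 0 k.+1)].

Lemma TsetP u k : reflect (exists2 k', k' <= k & u \in blk k') (u \in Tset k).
Proof.
rewrite inE; apply: (iffP hasP) => [[k' H1 H2]|[k' H1 H2]].
  by exists k' => //; move: H1; rewrite mem_iota add0n ltnS.
by exists k' => //; rewrite mem_iota add0n ltnS H1.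
Qed.

Lemma Tset_o k : o \in Tset k.
Proof. by apply/TsetP; exists 0 => //=; rewrite inE. Qed.

Lemma TsetS k : Tset k.+1 = Tset k :|: blk k.+1.
Proof.
apply/setP => u; rewrite in_setU; apply/TsetP/orP => [[k' Hk Hu]|[/TsetP[k' Hk Hu]|Hu]].
- move: Hk; rewrite leq_eqVlt => /orP[/eqP Ek|Hk]; first by right; rewrite -Ek.
  by left; apply/TsetP; exists k'.
- by exists k' => //; apply: leqW.
- by exists k.+1.
Qed.

Lemma Tset_mono k k' : k <= k' -> Tset k \subset Tset k'.
Proof.
move=> H; apply/subsetP => u /TsetP[j Hj Hu]; apply/TsetP; exists j => //.
exact: leq_trans H.
Qed.

Lemma nb_le_deg (A : {set 'I_n.+1}) u : #|[set w in A | adj R w u]| <= deg R u.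
Proof.
rewrite (deg_split R u A); apply: leq_trans (leq_addr _ _).
by rewrite leq_eqVlt; apply/orP; left; apply/eqP; apply: eq_card => w; rewrite !inE adjC.
Qed.

Definition I1 k := forall u, u != o ->
  cfg k u + (u \in Tset k) * deg R u = d u + #|[set w in Tset k | adj R w u]|.

Lemma disj_of_I1 k : I1 k -> forall u, u \in blk k.+1 -> u \notin Tset k.
Proof.
move=> H u Hu; have uo := block_o Hu; have Hd := block_unst Hu.
apply/negP => uT; have := H u uo; rewrite uT mul1n => E.
have := nb_le_deg (Tset k) u; have := Hst uo. lia.
Qed.

Lemma I1_all k : I1 k.
Proof.
elim: k => [|k IH] u uo.
  have -> : Tset 0 = [set o].
    by apply/setP => x; apply/TsetP/idP => [[k' ]|Hx]; [rewrite leqn0 => /eqP -> | exists 0].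
  rewrite /= ffunE (negbTE uo) inE (negbTE uo) mul0n addn0; congr (_ + _).
  rewrite (_ : [set w in [set o] | adj R w u] = if adj R o u then [set o] else set0).
    by case: (adj R o u); rewrite ?cards1 ?cards0.
  by apply/setP => x; rewrite !inE; case: (eqVneq x o) => [->|]; case: (adj R o u); rewrite ?inE ?eqxx //= => /negbTE ->.
have Hdisj := disj_of_I1 IH.
have DB : [disjoint Tset k & blk k.+1].
  by rewrite disjoint_sym; apply/pred0P => x /=; apply/negbTE/negP => /andP[/Hdisj /negbTE ->].
rewrite TsetS card_union_disj // in_setU.
have := IH u uo.
rewrite [cfg k.+1]/= ffunE (negbTE uo) -/(canon_block R d k.+1).
case uB: (u \in blk k.+1).
  have uT : u \notin Tset k by exact: Hdisj.
  rewrite (negbTE uT) /= mul0n addn0 mul1n => E.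
  have -> : [set w in blk k.+1 | adj R w u] = set0.
    apply/eqP; rewrite -subset0; apply/subsetP => x; rewrite inE => /andP[xB xu].
    by rewrite (block_indep xB uB) in xu.
  rewrite cards0 !addn0 subnK; [exact: E | exact: block_unst uB].
rewrite orbF subn0 => E.
by case: (u \in Tset k) E; rewrite ?mul1n ?mul0n ?addn0 => E; lia.
Qed.
End Analysis.

Section Analysis2.
Variables (n : nat) (R : {set 'I_n.+1}) (d : config n).
Hypothesis Hst : stable R d.
Hypothesis Hnf : NoFSC R d.
Local Notation o := (ord0 : 'I_n.+1).
Local Notation blk := (canon_block R d).
Local Notation cfg := (canon_cfg R d).
Local Notation TS := (Tset R d).

Lemma progress k : TS k != setT -> #|TS k| < #|TS k.+2|.
Proof.
move=> HT.
have H1 : o \notin ~: TS k by rewrite inE negbK Tset_o.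
have H2 : ~: TS k != set0.
  by apply: contra HT => /eqP H; rewrite -(setCK (TS k)) H setC0.
have [v vS Hv] := Hnf H1 H2.
move: vS; rewrite inE => vT.
have vo : v != o by apply: contraNneq vT => ->; exact: Tset_o.
have E := I1_all Hst k vo; rewrite (negbTE vT) mul0n addn0 in E.
have Hdeg : deg R v <= cfg k v.
  rewrite E (deg_split R v (TS k)) addnC.
  have -> : [set u | adj R v u & u \notin TS k] = [set u in ~: TS k | adj R v u].
    by apply/setP => w; rewrite !inE andbC.
  have -> : [set u in TS k | adj R v u] = [set w in TS k | adj R w v].
    by apply/setP => w; rewrite !inE adjC.
  by rewrite leq_add2r.
suff vT2 : v \in TS k.+2.
  apply: proper_card; apply/properP; split; first by apply: Tset_mono; lia.
  by exists v.
case par: ((v \notin R) == odd k.+1).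
  by apply/TsetP; exists k.+1 => //; rewrite /= inE vo par Hdeg.
apply/TsetP; exists k.+2 => //.
have vB : v \notin blk k.+1 by rewrite /= inE par andbF.
rewrite [blk k.+2]/= inE vo /= ffunE (negbTE vo).
have -> : (v \in unstable_in R (cfg k) (~~ odd k)) = false by exact: negbTE vB.
rewrite subn0 (leq_trans Hdeg (leq_addr _ _)) andbT.
by move: par => /=; case: (v \in R); case: (odd k).
Qed.

Lemma full_aux m : TS (m.*2) = setT \/ m < #|TS (m.*2)|.
Proof.
elim: m => [|m [IH|IH]].
- by right; apply/card_gt0P; exists o; exact: Tset_o.
- left; apply/eqP; rewrite eqEsubset subsetT /= -IH doubleS; by apply: Tset_mono; lia.
case: (eqVneq (TS m.*2) setT) => [E|NE].
  left; apply/eqP; rewrite eqEsubset subsetT /= -E doubleS; by apply: Tset_mono; lia.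
by right; rewrite doubleS; apply: leq_trans (progress NE).
Qed.

Lemma Tset_full : TS ((n.+1).*2) = setT.
Proof.
case: (full_aux n.+1) => // H.
have := max_card (mem (TS (n.+1).*2)); rewrite card_ord => H2.
by move: (leq_trans H H2); rewrite ltnn.
Qed.

Lemma all_topple u : exists k, u \in blk k.
Proof.
have : u \in TS ((n.+1).*2) by rewrite Tset_full inE.
by case/TsetP => k _ Hk; exists k.
Qed.

Lemma block_uniq u k1 k2 : u \in blk k1 -> u \in blk k2 -> k1 = k2.
Proof.
wlog H : k1 k2 / k1 <= k2.
  move=> W H1 H2; case: (leqP k1 k2) => Hk; first exact: W.
  by apply/esym; apply: W => //; exact: ltnW.
move=> H1 H2; move: H; rewrite leq_eqVlt => /orP[/eqP //|].
case: k2 H2 => // k H2 Hk.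
have := disj_of_I1 Hst (I1_all Hst k) H2.
by have -> : u \in TS k by apply/TsetP; exists k1.
Qed.

Definition tm u := ex_minn (all_topple u).

Lemma tmP u : u \in blk (tm u).
Proof. by rewrite /tm; case: ex_minnP. Qed.

Lemma blockE u k : (u \in blk k) = (tm u == k).
Proof.
apply/idP/eqP => [H|<-]; last exact: tmP.
exact: block_uniq (tmP u) H.
Qed.

Lemma TsetE u k : (u \in TS k) = (tm u <= k).
Proof.
apply/TsetP/idP => [[k' Hk]|H]; first by rewrite blockE => /eqP ->.
by exists (tm u) => //; exact: tmP.
Qed.

Lemma tm_o : tm o = 0.
Proof. by apply/eqP; rewrite -blockE /= inE. Qed.

Lemma tm_pos u : u != o -> 0 < tm u.
Proof.
move=> uo; rewrite lt0n; apply: contraNneq uo => H.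
by have := tmP u; rewrite H /= inE.
Qed.

Lemma adj_tm u w : adj R u w -> tm u != tm w.
Proof.
move=> H; apply/eqP => E.
have Hu := tmP u; have Hw := tmP w; rewrite -E in Hw.
by rewrite (block_indep Hu Hw) in H.
Qed.

Lemma unst u : u != o -> deg R u <= d u + #|[set w | adj R w u & tm w < tm u]|.
Proof.
move=> uo; have := tm_pos uo; have := tmP u.
case E: (tm u) => [//|k] Hu _.
have := I1_all Hst k uo; rewrite TsetE E ltnn mul0n addn0 => E2.
have -> : [set w | adj R w u & tm w < k.+1] = [set w in TS k | adj R w u].
  by apply/setP => w; rewrite in_set [RHS]in_set TsetE ltnS andbC.
by rewrite -E2; exact: block_unst.
Qed.

Lemma canon_full : cfg ((n.+1).*2) = d.
Proof.
apply/ffunP => u; case: (eqVneq u o) => [->|uo]; first exact: canon_cfg_o.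
have := I1_all Hst ((n.+1).*2) uo; rewrite Tset_full in_setT mul1n.
have -> : #|[set w in setT | adj R w u]| = deg R u.
  by apply: eq_card => w; rewrite !inE adjC.
by move/addIn.
Qed.

Lemma topples_beforeE u w : topples_before R d u w <-> tm u < tm w.
Proof.
split.
  case=> k [Hu Hw]; move: Hu; rewrite blockE => /eqP Ek.
  rewrite ltnNge; apply/negP => H; rewrite Ek in H.
  by have := Hw (tm w) H; rewrite tmP.
move=> H; exists (tm u); split; first exact: tmP.
move=> k' Hk; rewrite blockE; apply/eqP => E; rewrite E in H.
by move: (leq_trans H Hk); rewrite ltnn.
Qed.
End Analysis2.

Section Late.
Variables (n : nat) (R : {set 'I_n.+1}) (d : config n).
Hypothesis Hst : stable R d.
Hypothesis Hnf : NoFSC R d.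
Local Notation o := (ord0 : 'I_n.+1).
Local Notation t := (tm Hst Hnf).

Definition early x := #|[set w | adj R w x & t w < t x]|.
Definition late x := #|[set w | adj R x w & t x < t w]|.

Lemma deg_el x : deg R x = early x + late x.
Proof.
rewrite (deg_split R x [set w | t w < t x]); congr (_ + _); apply: eq_card => w; rewrite !inE.
  by rewrite adjC andbC.
case A: (adj R x w) => //=.
have := adj_tm Hst Hnf A; rewrite -ltnNge.
by rewrite ltnS ltn_neqAle => ->.
Qed.

Lemma late_le x : x != o -> late x <= d x.
Proof. by move=> xo; have := unst Hst Hnf xo; rewrite -/(early x) deg_el addnC leq_add2r. Qed.

Lemma stable_nofsc_of (c' : config n) :
  (forall x, x != o -> late x <= c' x) -> NoFSC R c'.
Proof.
move=> H S HoS HS; case/set0Pn: HS => x0 x0S.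
case: (arg_minnP t x0S) => x xS Hmin.
exists x => //.
have xo : x != o by apply: contraNneq HoS => <-.
apply: leq_trans (H x xo); apply: subset_leq_card; apply/subsetP => y.
rewrite !inE => /andP[yS A]; rewrite A /=.
have := Hmin y yS; have := adj_tm Hst Hnf A; rewrite ltn_neqAle => -> ->.
done.
Qed.
End Late.

Section Main.
Variables (n : nat) (R : {set 'I_n.+1}) (c : config n).
Hypothesis Hf : ferrers R.
Hypothesis Hmin : rec_min R c.
Local Notation o := (ord0 : 'I_n.+1).
Local Notation rt := (clos_refl_trans _ (@sp_step n R)).

Let Hst : stable R c := proj1 (proj1 Hmin).
Let Hinv := rec_inv Hf (proj1 Hmin).
Let Hnf : NoFSC R c := proj2 Hinv.
Let Ho : c o = 0 := proj1 Hinv.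
Local Notation t := (tm Hst Hnf).

Lemma adj_o w : w \notin R -> adj R o w.
Proof.
move=> wR; have oR := proj1 (andP Hf).
have wo : w != o by apply: contraNneq wR => ->.
apply/orP; left; rewrite /cell oR wR /=.
by move: wo; rewrite -val_eqE /= lt0n.
Qed.

Lemma tight u : u != o -> c u = late Hst Hnf u.
Proof.
move=> uo; apply/eqP; rewrite eqn_leq late_le // andbT leqNgt; apply/negP => Hlt.
pose c' : config n := [ffun w => c w - (w == u)].
have cu : 0 < c u by apply: leq_ltn_trans Hlt.
have c'E : forall w, c' w = if w == u then (c u).-1 else c w.
  by move=> w; rewrite ffunE; case: eqVneq => [->|]; rewrite ?subn1 ?subn0.
clearbody c'.
have Hst' : stable R c'.
  move=> w wo; rewrite c'E; case: eqVneq => [->|_]; last exact: Hst.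
  by apply: leq_ltn_trans (Hst uo); rewrite leq_pred.
have Hnf' : NoFSC R c'.
  apply: (@stable_nofsc_of _ _ _ Hst Hnf) => x xo; rewrite c'E; case: eqVneq => [->|_].
    by rewrite -ltnS prednK.
  exact: (late_le Hst Hnf xo).
have Hburn : rt (topple_sink R c') c'.
  by have := canon_reach R c' (n.+1).*2; rewrite canon_full.
have Hc' : rt c c'.
  apply: rt_trans Hburn.
  case uR: (u \in R).
    pose X : config n := [ffun w => if w == u then (c u).-1 + deg R u
                                    else if adj R u w then c w else c w + adj R o w].
    apply: (@rt_trans _ _ _ X).
      apply: add_many; first by rewrite ffunE eq_sym (negbTE uo) adj_irr addn0; case: ifP.
      move=> w; rewrite ffunE; case: eqVneq => [->|_].
        have := Hst uo; lia.
      by case: (adj R u w) => //; exact: leq_addr.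
    have -> : topple_sink R c' = topple R X u.
      apply/ffunP => w; rewrite !ffunE; case: eqVneq => [->|wo].
        by rewrite c'E eq_sym (negbTE uo) adj_irr addn0; case: ifP.
      rewrite c'E; case: (eqVneq w u) => [->|wu].
        rewrite addnK.
        suff -> : adj R o u = false by rewrite addn0.
        by rewrite /adj /cell uR /= ?ltn0 ?andbF.
      case A: (adj R u w) => /=.
        have wR : w \notin R by rewrite -(adj_side A) uR.
        by rewrite adj_o.
      by rewrite addn0.
    apply: rt_step; right; exists u; split => //.
    by rewrite ffunE eqxx leq_addl.
  apply: add_many; first by rewrite ffunE eqxx c'E eq_sym (negbTE uo).
  move=> w; rewrite ffunE c'E; case: (eqVneq w o) => [->|wo].
    by rewrite eq_sym (negbTE uo).
  case: (eqVneq w u) => [->|_]; last exact: leq_addr.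
  by rewrite adj_o ?uR // addn1 prednK.
have Hrec' : recurrent R c' by split => //; apply: rt_trans (proj2 (proj1 Hmin)) Hc'.
have := proj2 Hmin c' Hrec'; apply/negP; rewrite -ltnNge.
rewrite /grains (bigD1 u) //= [X in _ < X](bigD1 u) //= c'E eqxx.
rewrite -(prednK cu) addSn ltnS leq_add2l.
by rewrite leq_eqVlt; apply/orP; left; apply/eqP; apply: eq_bigr => w wu; rewrite c'E (negbTE wu).
Qed.

Lemma phiE i j : phi_CT R c i j = (t i < t j).
Proof.
rewrite /phi_CT; apply/asboolP/idP => H.
  exact/(topples_beforeE Hst Hnf).
exact/(topples_beforeE Hst Hnf).
Qed.

Lemma cell_tm i j : cell R i j -> t i != t j.
Proof. by move=> H; apply: adj_tm; rewrite /adj H. Qed.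

Lemma main_res : EWtab R (phi_CT R c) /\ phi_TC R (phi_CT R c) = c.
Proof.
split; first split.
- move=> j Hc; rewrite phiE tm_o; apply: tm_pos.
  by apply: contraTneq Hc => ->; rewrite /cell ltnn !andbF.
- move=> i iR io; have H := unst Hst Hnf io; have := Hst io => H2.
  have : 0 < #|[set w | adj R w i & t w < t i]| by lia.
  case/card_gt0P => w; rewrite inE => /andP[A Hlt]; exists w.
    case/orP: A => [/and3P[_ H3 _]|//]; by rewrite iR in H3.
  by rewrite phiE -leqNgt ltnW.
- move=> i1 i2 j1 j2 _ _ c11 c12 c21 c22; rewrite !phiE.
  move: (cell_tm c11) (cell_tm c12) (cell_tm c21) (cell_tm c22).
  move=> /eqP e1 /eqP e2 /eqP e3 /eqP e4.
  rewrite -!leqNgt; case/orP => /and4P[h1 h2 h3 h4]; lia.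
apply/ffunP => v; rewrite ffunE; case: (eqVneq v o) => [->|vo]; first by rewrite Ho.
rewrite (tight vo) /late; case vR: (v \in R).
  apply: eq_card => w; rewrite !inE phiE /adj [cell R w v]/cell vR /= andbF orbF.
  done.
apply: eq_card => w; rewrite !inE phiE /adj [cell R v w]/cell vR /=.
case C: (cell R w v) => //=.
have := cell_tm C; rewrite -leqNgt leq_eqVlt eq_sym => /negbTE ->.
done.
Qed.
End Main.

Theorem proposition3p10 (n : nat) (R : {set 'I_n.+1}) (c : config n) :
  ferrers R -> rec_min R c ->
  EWtab R (phi_CT R c) /\ phi_TC R (phi_CT R c) = c.
Proof. by move=> Hf Hmin; exact: main_res. Qed.
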